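(* Let $A$ be a set of $n$ distinct real numbers forming an arithmetic progression. Then for every $a\in A$ there is an ordering $b_1,b_2,\dots,b_n$ of the elements of $A$ with $b_1=a$ such that the $n-1$ numbers $|b_2-b_1|,|b_3-b_2|,\dots,|b_n-b_{n-1}|$ are pairwise distinct. *)

(* Defs.v *)
From mathcomp Require Import all_boot all_order all_algebra.
From mathcomp Require Import reals.
Set Implicit Arguments. Unset Strict Implicit. Unset Printing Implicit Defensive.
Import Order.TTheory GRing.Theory Num.Theory.
Local Open Scope ring_scope.

Definition ap (R : realType) (c d : R) (n : nat) : seq R :=
  [seq c + i%:R * d | i <- iota 0 n].

Definition consec_absdiffs (R : realType) (s : seq R) : seq R :=
  [seq `|p.2 - p.1| | p <- zip s (behead s)].

(* Main.v *)
Require Import Defs.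
From mathcomp Require Import all_boot all_order all_algebra.
From mathcomp Require Import reals.
From mathcomp Require Import zify.
Set Implicit Arguments. Unset Strict Implicit. Unset Printing Implicit Defensive.

Definition dst (x y : nat) := (x - y) + (y - x).

Fixpoint dists (s : seq nat) : seq nat :=
  match s with
  | x :: ((y :: _) as t) => dst x y :: dists t
  | _ => [::]
  end.

Lemma dists_cons2 x y u : dists (x :: y :: u) = dst x y :: dists (y :: u).
Proof. by []. Qed.

Lemma dists_cat s t : s != [::] -> t != [::] ->
  dists (s ++ t) = dists s ++ dst (last 0 s) (head 0 t) :: dists t.
Proof.
elim: s => [|x s IH] // _ tn.
case: s IH => [|y s] IH.
  by clear IH; case: t tn.
rewrite cat_cons cat_cons dists_cons2 -cat_cons IH // dists_cons2.
Qed.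

Lemma dists_shift c s : dists (map (addn c) s) = dists s.
Proof.
elim: s => [|x s IH] //.
case: s IH => [|y s] IH //.
rewrite map_cons map_cons dists_cons2 -map_cons IH dists_cons2 /dst; congr (_ :: _); lia.
Qed.

Fixpoint outP (c a b : nat) : seq nat :=
  if c is c'.+1 then a :: b :: outP c' a.-1 b.+1 else [::].
Fixpoint outQ (c a b : nat) : seq nat :=
  if c is c'.+1 then a :: b :: outQ c' a.-1 b.+1 else [:: a].
Fixpoint inP (c a b : nat) : seq nat :=
  if c is c'.+1 then a :: b :: inP c' a.+1 b.-1 else [::].

Lemma outP_perm c a b : c <= a.+1 -> perm_eq (outP c a b) (iota (a.+1 - c) c ++ iota b c).
Proof.
elim: c a b => [|c IH] a b // Hc.
case: (posnP a) => [a0|apos].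
  subst a; have c0 : c = 0 by lia.
  by subst c.
have ea : a.-1.+1 = a := prednK apos.
have H := IH a.-1 b.+1 ltac:(rewrite ea; lia).
rewrite ea in H.
have E1 : iota (a.+1 - c.+1) c.+1 = iota (a - c) c ++ [:: a].
  have -> : c.+1 = c + 1 by lia.
  rewrite iotaD; congr (iota _ _ ++ _); [lia|]; rewrite /= ; congr [:: _]; lia.
rewrite E1.
have H2 : perm_eq (outP c.+1 a b) (a :: b :: (iota (a - c) c ++ iota b.+1 c)) by rewrite /= !perm_cons.
apply: (perm_trans H2).
apply/permP => P; rewrite /= !count_cat /=; lia.
Qed.

Lemma outQ_perm c a b : c <= a -> perm_eq (outQ c a b) (iota (a - c) c.+1 ++ iota b c).
Proof.
elim: c a b => [|c IH] a b Hc.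
  by rewrite /= subn0.
have apos : 0 < a by lia.
have ea : a.-1.+1 = a := prednK apos.
have H := IH a.-1 b.+1 ltac:(lia).
have e2 : a.-1 - c = a - c.+1 by lia.
rewrite e2 in H.
have E1 : iota (a - c.+1) c.+2 = iota (a - c.+1) c.+1 ++ [:: a].
  have -> : c.+2 = c.+1 + 1 by lia.
  rewrite iotaD; congr (iota _ _ ++ _); rewrite /= ; congr [:: _]; lia.
rewrite E1.
have H2 : perm_eq (outQ c.+1 a b) (a :: b :: (iota (a - c.+1) c.+1 ++ iota b.+1 c)) by rewrite /= !perm_cons.
apply: (perm_trans H2).
apply/permP => P; rewrite /= !count_cat /=; lia.
Qed.

Lemma inP_perm c a b : c <= b.+1 -> perm_eq (inP c a b) (iota a c ++ iota (b.+1 - c) c).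
Proof.
elim: c a b => [|c IH] a b // Hc.
case: (posnP b) => [b0|bpos].
  subst b; have c0 : c = 0 by lia.
  by subst c.
have eb : b.-1.+1 = b := prednK bpos.
have H := IH a.+1 b.-1 ltac:(lia).
rewrite eb in H.
have E1 : iota (b.+1 - c.+1) c.+1 = iota (b - c) c ++ [:: b].
  have -> : c.+1 = c + 1 by lia.
  rewrite iotaD; congr (iota _ _ ++ _); [lia|]; rewrite /= ; congr [:: _]; lia.
rewrite E1.
have H2 : perm_eq (inP c.+1 a b) (a :: b :: (iota a.+1 c ++ iota (b - c) c)) by rewrite /= !perm_cons.
apply: (perm_trans H2).
apply/permP => P; rewrite /= !count_cat /=; lia.
Qed.

Lemma dists_outQ_cons z c x y : dists (z :: outQ c x y) = dst z x :: dists (outQ c x y).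
Proof. by case: c. Qed.

Lemma outQ_dists c a b : c <= a -> a <= b -> dists (outQ c a b) = iota (b - a) c.*2.
Proof.
elim: c a b => [|c IH] a b Hc Hab //.
have -> : outQ c.+1 a b = a :: b :: outQ c a.-1 b.+1 by [].
rewrite dists_cons2 dists_outQ_cons IH; [|lia|lia].
have -> : c.+1.*2 = (c.*2).+2 by lia.
rewrite /= /dst; congr [:: _, _ & iota _ _]; lia.
Qed.

Lemma outP_dists c a b : c < a.+1 -> a <= b -> dists (outP c.+1 a b) = iota (b - a) c.*2.+1.
Proof.
elim: c a b => [|c IH] a b Hc Hab.
  by rewrite /= /dst; congr [:: _]; lia.
case: a Hc Hab => [|a] Hc Hab; first by lia.
have -> : outP c.+2 a.+1 b = a.+1 :: b :: outP c.+1 a b.+1 by [].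
have -> : outP c.+1 a b.+1 = a :: b.+1 :: outP c a.-1 b.+2 by [].
rewrite dists_cons2 dists_cons2 -[_ :: _ :: outP c _ _]/(outP c.+1 a b.+1) IH; [|lia|lia].
have -> : c.+1.*2.+1 = (c.*2.+1).+2 by lia.
have E : b.+1 - a = (b - a.+1).+2 by lia.
rewrite E /= /dst; congr [:: _, _ & _]; lia.
Qed.

Lemma inP_dists c a b : a + c.*2.+1 <= b -> dists (inP c.+1 a b) = rev (iota (b - a - c.*2) c.*2.+1).
Proof.
elim: c a b => [|c IH] a b Hc.
  by rewrite /= /dst; congr [:: _]; lia.
case: b Hc => [|b] Hc; first by lia.
have -> : inP c.+2 a b.+1 = a :: b.+1 :: inP c.+1 a.+1 b by [].
have -> : inP c.+1 a.+1 b = a.+1 :: b :: inP c a.+2 b.-1 by [].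
rewrite dists_cons2 dists_cons2 -[_ :: _ :: inP c _ _]/(inP c.+1 a.+1 b) IH; [|lia].
have -> : c.+1.*2.+1 = c.*2.+1 + 2 by lia.
have E : b.+1 - a - c.+1.*2 = b - a.+1 - c.*2 by lia.
rewrite iotaD rev_cat E /= /dst; congr [:: _, _ & _]; lia.
Qed.

Lemma outP_last c a b x : last x (outP c.+1 a b) = b + c.
Proof.
elim: c a b x => [|c IH] a b x; first by rewrite addn0.
have -> : outP c.+2 a b = a :: b :: outP c.+1 a.-1 b.+1 by [].
rewrite last_cons last_cons IH; lia.
Qed.

Lemma outQ_last c a b x : last x (outQ c a b) = a - c.
Proof.
elim: c a b x => [|c IH] a b x; first by rewrite subn0.
have -> : outQ c.+1 a b = a :: b :: outQ c a.-1 b.+1 by [].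
rewrite last_cons last_cons IH; lia.
Qed.

Lemma inP_last c a b x : last x (inP c.+1 a b) = b - c.
Proof.
elim: c a b x => [|c IH] a b x; first by rewrite subn0.
have -> : inP c.+2 a b = a :: b :: inP c.+1 a.+1 b.-1 by [].
rewrite last_cons last_cons IH; lia.
Qed.

Lemma comb_perm D X m L : 0 < m -> perm_eq D (iota 1 m.-1) -> perm_eq X (iota m.+1 L) ->
  perm_eq (X ++ m :: D) (iota 1 (m + L)) /\ perm_eq (D ++ m :: X) (iota 1 (m + L)).
Proof.
case: m => [//|m] _ HD HX; rewrite /= in HD.
have E : iota 1 (m.+1 + L) = iota 1 m ++ m.+1 :: iota m.+2 L.
  have -> : m.+1 + L = m + (1 + L) by lia.
  rewrite iotaD iotaD /=; congr (_ ++ _ :: iota _ _); lia.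
rewrite E; split; apply/permP => P;
  rewrite !count_cat /= (permP HD) (permP HX); move: (count _ _) (count _ _) (nat_of_bool _) => x y z; lia.
Qed.

Lemma perm_shift c s m : perm_eq s (iota 0 m) -> perm_eq (map (addn c) s) (iota c m).
Proof.
move=> H; have -> : iota c m = map (addn c) (iota 0 m) by rewrite -iotaDl addn0.
exact: perm_map.
Qed.

Lemma nonempty_of_perm (s : seq nat) m : 0 < m -> perm_eq s (iota 0 m) -> exists q s', s = q :: s'.
Proof.
move=> m0 H; case: s H => [|q s'] H; last by exists q, s'.
by move/perm_size: H; rewrite size_iota /=; lia.
Qed.

Lemma grace n k : k.*2 < n -> exists p : seq nat,
  [/\ perm_eq p (iota 0 n), head 0 p = k, last 0 p = k + n./2 & perm_eq (dists p) (iota 1 n.-1)].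
Proof.
elim/ltn_ind: n k => n IH k Hk.
have Hn := odd_double_half n.
case: (ltnP n 2) => Hn2.
  have n1 : n = 1 by lia.
  have k0 : k = 0 by lia.
  subst n k; exists [:: 0]; split => //.
set h := n./2 in Hn *.
case: (leqP (n - h) k.*2) => HM.
-
  set j := n - h - k.
  set m := n - j.*2.
  set s := k - j.
  have Hm : m < n by lia.
  have Hs : s.*2 < m by lia.
  have [Q [HQp HQh HQl HQd]] := IH m Hm s Hs.
  have m0 : 0 < m by lia.
  have [q [Q' EQ]] := nonempty_of_perm m0 HQp.
  have j0 : 0 < j by lia.
  have [j1 ej] : exists j1, j = j1.+1 by exists (j - 1); lia.
  exists (map (addn j) Q ++ inP j 0 n.-1).
  have Hm2 := odd_double_half m.
  split.
  + have Hi := inP_perm 0 (ltac:(lia) : j <= n.-1.+1).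
    have Hs1 := perm_shift j HQp.
    have E : iota 0 n = iota 0 j ++ iota j m ++ iota (j + m) j.
      by rewrite -iotaD -iotaD; congr iota; lia.
    rewrite E; apply/permP => P.
    rewrite !count_cat (permP Hs1) (permP Hi) count_cat.
    have -> : n.-1.+1 - j = j + m by lia.
    move: (count _ _) (count _ _) (count _ _) => x y z; lia.
  + move: HQh; rewrite EQ /= => ->; lia.
  + rewrite last_cat ej inP_last; lia.
  + have Hh : head 0 (inP j 0 n.-1) = 0 by rewrite ej.
    rewrite dists_cat; last first.
      by rewrite ej.
      by rewrite EQ.
    rewrite dists_shift.
    have Hl : last 0 (map (addn j) Q) = j + last 0 Q.
      by rewrite EQ /= last_map.
    rewrite Hl Hh.
    have -> : dst (j + last 0 Q) 0 = m by rewrite /dst HQl; lia.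
    have Hd : dists (inP j 0 n.-1) = rev (iota m.+1 j1.*2.+1).
      rewrite ej inP_dists; [congr (rev (iota _ _)); lia | lia].
    rewrite Hd.
    have Hr : perm_eq (rev (iota m.+1 j1.*2.+1)) (iota m.+1 j1.*2.+1) by rewrite perm_rev.
    have [_ H2] := comb_perm m0 HQd Hr.
    have -> : n.-1 = m + j1.*2.+1 by lia.
    exact: H2.
- case: (leqP (4 * k + 3) n) => HB.
  +
    set m := n - k.*2 - 2.
    have Hm : m < n by lia.
    have Hs : k.*2 < m by lia.
    have [Q [HQp HQh HQl HQd]] := IH m Hm k Hs.
    have m0 : 0 < m by lia.
    have [q [Q' EQ]] := nonempty_of_perm m0 HQp.
    have Hm2 := odd_double_half m.
    move: HQh HQl; rewrite EQ /= => HQh HQl.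
    exists (outP k.+1 k (n - k - 1) ++ map (addn k.+1) (q :: Q')).
    split.
    * have Hi := outP_perm (n - k - 1) (leqnn k.+1).
      have Hs1 := perm_shift k.+1 HQp. rewrite EQ in Hs1.
      have E : iota 0 n = iota 0 k.+1 ++ iota k.+1 m ++ iota (k.+1 + m) k.+1.
        by rewrite -iotaD -iotaD; congr iota; lia.
      rewrite E; apply/permP => P.
      rewrite !count_cat (permP Hs1) (permP Hi) count_cat subnn.
      have -> : n - k - 1 = k.+1 + m by lia.
      move: (count _ _) (count _ _) (count _ _) => x y z; lia.
    * by [].
    * rewrite last_cat map_cons last_cons last_map HQl; lia.
    * rewrite dists_cat //.
      rewrite dists_shift -EQ outP_dists; [|lia|lia].
      have Hh : head 0 (map (addn k.+1) Q) = k.+1 + k by rewrite EQ /= HQh.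
      rewrite outP_last Hh.
      have -> : dst (n - k - 1 + k) (k.+1 + k) = m by rewrite /dst; lia.
      have [H1 _] := comb_perm m0 HQd (perm_refl (iota m.+1 k.*2.+1)).
      have -> : n - k - 1 - k = m.+1 by lia.
      have -> : n.-1 = m + k.*2.+1 by lia.
      exact: H1.
  +
    set m := n - k.*2 - 1.
    set s := m - 1 - k.
    have Hm : m < n by lia.
    have Hs : s.*2 < m by lia.
    have [Q [HQp HQh HQl HQd]] := IH m Hm s Hs.
    have m0 : 0 < m by lia.
    have [q [Q' EQ]] := nonempty_of_perm m0 HQp.
    have Hm2 := odd_double_half m.
    move: HQh HQl; rewrite EQ /= => HQh HQl.
    exists (outQ k k (n - k) ++ map (addn k.+1) (q :: Q')).
    split.
    * have Hi := outQ_perm (n - k) (leqnn k).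
      have Hs1 := perm_shift k.+1 HQp. rewrite EQ in Hs1.
      have E : iota 0 n = iota 0 k.+1 ++ iota k.+1 m ++ iota (k.+1 + m) k.
        by rewrite -iotaD -iotaD; congr iota; lia.
      rewrite E; apply/permP => P.
      rewrite !count_cat (permP Hs1) (permP Hi) count_cat subnn.
      have -> : n - k = k.+1 + m by lia.
      move: (count _ _) (count _ _) (count _ _) => x y z; lia.
    * by case: (k).
    * rewrite last_cat map_cons last_cons last_map HQl; lia.
    * rewrite dists_cat //; last by case: (k).
      rewrite dists_shift -EQ outQ_dists; [|lia|lia].
      have Hh : head 0 (map (addn k.+1) Q) = k.+1 + s by rewrite EQ /= HQh.
      rewrite outQ_last Hh.
      have -> : dst (k - k) (k.+1 + s) = m by rewrite /dst; lia.
      have [H1 _] := comb_perm m0 HQd (perm_refl (iota m.+1 k.*2)).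
      have -> : n - k - k = m.+1 by lia.
      have -> : n.-1 = m + k.*2 by lia.
      exact: H1.
Qed.

Lemma grace_all n i : i < n -> exists p : seq nat,
  [/\ perm_eq p (iota 0 n), head 0 p = i & uniq (dists p)].
Proof.
move=> Hi.
have dU p : perm_eq (dists p) (iota 1 n.-1) -> uniq (dists p).
  by move/perm_uniq => ->; apply: iota_uniq.
case: (ltnP i.*2 n) => H.
  have [p [Hp Hh _ Hd]] := grace H.
  by exists p; split => //; apply: dU.
set k := n.-1 - i.
have Hk : k.*2 < n by lia.
have [p [Hp Hh _ Hd]] := grace Hk.
have pin : forall x, x \in p -> x < n.
  by move=> x; rewrite (perm_mem Hp) mem_iota.
set f := fun x => n.-1 - x.
exists (map f p); split.
- apply: uniq_perm.
  + rewrite map_inj_in_uniq; first by rewrite (perm_uniq Hp) iota_uniq.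
    move=> x y /pin xn /pin yn; rewrite /f; lia.
  + exact: iota_uniq.
  + move=> x; rewrite mem_iota add0n; apply/mapP/idP.
    * by case=> y /pin yn ->; rewrite /f; lia.
    * move=> xn; exists (n.-1 - x); last by rewrite /f; lia.
      by rewrite (perm_mem Hp) mem_iota; lia.
- case: p Hp Hh {Hd pin} => [|q p] Hp Hh.
    by move/perm_size: Hp; rewrite size_iota /=; lia.
  by move: Hh => /= ->; rewrite /f /k; lia.
- suff -> : dists (map f p) = dists p by apply: dU.
  elim: p pin {Hp Hh Hd} => [|x p IH] pin //.
  case: p IH pin => [|y p] IH pin //.
  rewrite map_cons map_cons dists_cons2 -map_cons IH; last first.
    by move=> z zin; apply: pin; rewrite inE zin orbT.
  rewrite dists_cons2; congr (_ :: _).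
  have xn := pin x (mem_head _ _).
  have yn : y < n by apply: pin; rewrite !inE eqxx orbT.
  rewrite /dst /f; lia.
Qed.

Import Order.TTheory GRing.Theory Num.Theory.
Local Open Scope ring_scope.

Lemma natr_absdiff (R : realType) (x y : nat) : `|(y%:R - x%:R : R)| = (dst x y)%:R.
Proof.
rewrite /dst; case: (leqP x y) => h.
  have -> : (x - y)%N = 0%N by lia.
  by rewrite add0n natrB // ger0_norm // subr_ge0 ler_nat.
have -> : (y - x)%N = 0%N by lia.
rewrite addn0 natrB ?(ltnW h) // -opprB normrN ger0_norm // subr_ge0 ler_nat; exact: ltnW.
Qed.

Lemma cad_cons2 (R : realType) (u v : R) t :
  consec_absdiffs (u :: v :: t) = `|v - u| :: consec_absdiffs (v :: t).
Proof. by []. Qed.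

Lemma cad_map (R : realType) (c d : R) (p : seq nat) :
  consec_absdiffs [seq c + i%:R * d | i <- p] = [seq (e%:R * `|d|) | e <- dists p].
Proof.
elim: p => [|x p IH] //.
case: p IH => [|y p] IH //.
rewrite (_ : [seq c + i%:R * d | i <- [:: x, y & p]] =
   (c + x%:R * d) :: [seq c + i%:R * d | i <- y :: p]) // .
rewrite (_ : [seq c + i%:R * d | i <- y :: p] =
   (c + y%:R * d) :: [seq c + i%:R * d | i <- p]) // cad_cons2.
rewrite -(_ : [seq c + i%:R * d | i <- y :: p] =
   (c + y%:R * d) :: [seq c + i%:R * d | i <- p]) // IH dists_cons2 map_cons.
congr (_ :: _).
rewrite -natr_absdiff -normrM; congr `|_|.
by rewrite mulrBl opprD addrACA subrr add0r.
Qed.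

Unset Implicit Arguments.

Theorem theorem1 (R : realType) (n : nat) (c d : R) (hd : d != 0) (a : R) :
  a \in ap c d n ->
  exists b : seq R,
    [/\ perm_eq b (ap c d n), head 0 b = a & uniq (consec_absdiffs b)].
Proof.
move=> /mapP [i]; rewrite mem_iota add0n => /andP [_ Hi] ->.
have [p [Hp Hh Hu]] := grace_all Hi.
exists [seq c + j%:R * d | j <- p]; split.
- by apply: perm_map.
- case: p Hp Hh {Hu} => [|q p] Hp Hh.
    by move/perm_size: Hp; rewrite size_iota /=; lia.
  by rewrite /= -Hh.
- rewrite cad_map map_inj_uniq // => x y /eqP.
  rewrite (inj_eq (mulIf _)) ?normr_eq0 // eqr_nat => /eqP //.
Qed.
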